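(* Let $G=(V,E)$ be a classical graph with vertex set $V=[n]$ and let $\phi\colon M_n\to M_d$ be an orthogonal representation of $\mathcal{S}_G=\operatorname{span}\{|e_i\rangle\langle e_j| : i=j\text{ or } i \text{ adjacent to } j\}$. For each $i\in[n]$ let $v_i$ be a vector in the range of $\phi(|e_i\rangle\langle e_i|)$. Then the map $f\colon V\to\mathbb{C}^d$, $f(i)=v_i$, is an orthogonal representation of $G$.
   Context: $(|e_k\rangle)$ is the standard basis of $\mathbb{C}^n$. A classical orthogonal representation of $G$ is a map $f\colon V\to\mathbb{C}^d$ such that $f(i)\perp f(j)$ whenever $i\neq j$ and $i,j$ are not adjacent. Elements $a,b$ of a $C^*$-algebra are orthogonal, $a\perp b$, if $ab=ba=a^*b=ab^*=0$. For a quantum graph $\mathcal{S}\subseteq M_n$ (a subspace closed under adjoints containing $I_n$), a completely positive map $\phi\colon M_n\to M_d$ is an orthogonal representation of $\mathcal{S}$ if $\phi(A)\perp\phi(B)$ for all $A,B\in M_n$ with $A\mathcal{S}B=B\mathcal{S}A=A^*\mathcal{S}B=A\mathcal{S}B^*=\{0\}$. *)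

(* Defs.v *)
From HB Require Import structures.
From mathcomp Require Import all_boot all_order all_algebra.
Set Implicit Arguments. Unset Strict Implicit. Unset Printing Implicit Defensive.
Import Order.TTheory GRing.Theory Num.Theory.
Local Open Scope ring_scope.

Section Defs.
Variable C : numClosedFieldType.

Definition adjmx (m n : nat) (A : 'M[C]_(m, n)) : 'M[C]_(n, m) :=
  \matrix_(i, j) (A j i)^*.

Definition psdf (T : finType) (A : T -> T -> C) : Prop :=
  exists (k : nat) (B : 'I_k -> T -> C),
    forall x y, A x y = \sum_(l < k) (B l x)^* * B l y.

(* An element of M_m(M_n) is a block family X : 'I_m -> 'I_m -> 'M_n,
   viewed as a kernel on 'I_m * 'I_n. *)
Definition completely_positive (n d : nat) (phi : 'M[C]_n -> 'M[C]_d) : Prop :=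
  linear phi /\
  forall (m : nat) (X : 'I_m -> 'I_m -> 'M[C]_n),
    psdf (fun p q : 'I_m * 'I_n => X p.1 q.1 p.2 q.2) ->
    psdf (fun p q : 'I_m * 'I_d => phi (X p.1 q.1) p.2 q.2).

Definition orthmx (d : nat) (a b : 'M[C]_d) : Prop :=
  a *m b = 0 /\ b *m a = 0 /\ adjmx a *m b = 0 /\ a *m adjmx b = 0.

Definition qorth_rep (n d : nat) (S : {vspace 'M[C]_n})
    (phi : 'M[C]_n -> 'M[C]_d) : Prop :=
  completely_positive phi /\
  forall A B : 'M[C]_n,
    (forall X, X \in S ->
        [/\ A *m X *m B = 0, B *m X *m A = 0,
            adjmx A *m X *m B = 0 & A *m X *m adjmx B = 0]) ->
    orthmx (phi A) (phi B).

Definition SG (n : nat) (e : rel 'I_n) : {vspace 'M[C]_n} :=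
  <<[seq delta_mx p.1 p.2 | p <- enum [pred p : 'I_n * 'I_n | (p.1 == p.2) || e p.1 p.2]]>>%VS.

Definition dotv (d : nat) (u v : 'cV[C]_d) : C :=
  \sum_(k < d) (u k 0)^* * v k 0.

Definition in_range (d : nat) (M : 'M[C]_d) (v : 'cV[C]_d) : Prop :=
  exists w : 'cV[C]_d, v = M *m w.

Definition orth_rep (n d : nat) (e : rel 'I_n) (f : 'I_n -> 'cV[C]_d) : Prop :=
  forall i j, i != j -> ~~ e i j -> dotv (f i) (f j) = 0.

End Defs.

(* Main.v *)
Require Import Defs.
From HB Require Import structures.
From mathcomp Require Import all_boot all_order all_algebra.
Import GRing.Theory Num.Theory.
Local Open Scope ring_scope.

Lemma adjmx_delta (C : numClosedFieldType) (n : nat) (i : 'I_n) :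
  adjmx (delta_mx i i : 'M[C]_n) = delta_mx i i.
Proof.
apply/matrixP=> a b; rewrite /adjmx !mxE.
by case: (a == i); case: (b == i); rewrite /= ?andbF ?andbT (conjC0, conjC1).
Qed.

Lemma adjmxM (C : numClosedFieldType) (m n p : nat) (A : 'M[C]_(m, n)) (B : 'M[C]_(n, p)) :
  adjmx (A *m B) = adjmx B *m adjmx A.
Proof.
apply/matrixP=> a b; rewrite /adjmx !mxE rmorph_sum.
by apply: eq_bigr => k _; rewrite !mxE rmorphM mulrC.
Qed.

Lemma SG_zero (C : numClosedFieldType) (n : nat) (e : rel 'I_n) (p q : 'I_n)
  (hpq : p != q) (hne : ~~ e p q) (X : 'M[C]_n) :
  X \in SG C e -> delta_mx p p *m X *m delta_mx q q = 0.
Proof.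
rewrite /SG.
set s := [seq _ | _ <- _].
move=> /(@coord_span _ _ _ (in_tuple s)) ->.
rewrite mulmx_sumr mulmx_suml big1 // => k _.
rewrite -scalemxAr -scalemxAl.
have szs : size s = size (enum [pred p : 'I_n * 'I_n | (p.1 == p.2) || e p.1 p.2]) := size_map _ _.
rewrite /s (nth_map (p, p)); last by rewrite -szs.
set r := nth _ _ _.
have : r \in [pred p : 'I_n * 'I_n | (p.1 == p.2) || e p.1 p.2].
  by rewrite -mem_enum mem_nth // -szs.
rewrite inE; case: r => r1 r2 /= hr.
rewrite mul_delta_mx_cond; case: eqP => [E1|_]; last by rewrite mulr0n mul0mx scaler0.
rewrite mulr1n mul_delta_mx_cond; case: eqP => [E2|_]; last by rewrite mulr0n scaler0.
by move: hr hpq hne; rewrite -E1 E2 => /orP [->|->].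
Qed.

Theorem proposition5p5 (C : numClosedFieldType) (n d : nat) (e : rel 'I_n)
    (e_sym : symmetric e) (e_irr : irreflexive e)
    (phi : 'M[C]_n -> 'M[C]_d) (hphi : qorth_rep (SG C e) phi)
    (v : 'I_n -> 'cV[C]_d)
    (hv : forall i, in_range (phi (delta_mx i i)) (v i)) :
  orth_rep e v.
Proof.
move=> i j hij hne.
have hji : j != i by rewrite eq_sym.
have hne' : ~~ e j i by rewrite e_sym.
have [_ [_ [hadj _]]] : orthmx (phi (delta_mx i i)) (phi (delta_mx j j)).
  apply: hphi.2 => X hX.
  by rewrite !adjmx_delta !(@SG_zero C n e i j hij hne X hX) !(@SG_zero C n e j i hji hne' X hX).
have -> : dotv (v i) (v j) = (adjmx (v i) *m v j) 0 0.
  by rewrite /dotv !mxE; apply: eq_bigr => k _; rewrite !mxE.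
case: (hv i) => w -> ; case: (hv j) => w' ->.
by rewrite adjmxM -mulmxA (mulmxA (adjmx (phi _))) hadj mul0mx mulmx0 mxE.
Qed.
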